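(* The full subcategory $\overline{\square}_\vee$ of $\mathbf{SLat}$ is closed under retracts in $\mathbf{SLat}$: if $B \in \mathbf{SLat}$ is a retract (in $\mathbf{SLat}$) of some $A \in \overline{\square}_\vee$, then $B \in \overline{\square}_\vee$.
   Context: $\mathbf{SLat}$ is the category of (join-)semilattices—sets with an associative, commutative, idempotent binary operation $\vee$—and homomorphisms preserving $\vee$ (not necessarily preserving any bounds or meets). Each semilattice is a poset via $x\le y\iff x\vee y=y$. $\overline{\square}_\vee$ is the full subcategory of $\mathbf{SLat}$ on the finite inhabited semilattices whose induced poset is a distributive lattice. *)

(* Defs.v *)
From Stdlib Require Import List.

Definition is_semilattice {T : Type} (j : T -> T -> T) : Prop :=
  (forall x y z, j x (j y z) = j (j x y) z) /\
  (forall x y, j x y = j y x) /\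
  (forall x, j x x = x).

(* Morphisms of SLat: maps preserving the join (no bounds required). *)
Definition is_slat_hom {S T : Type} (jS : S -> S -> S) (jT : T -> T -> T)
  (f : S -> T) : Prop :=
  forall x y, f (jS x y) = jT (f x) (f y).

Definition sle {T : Type} (j : T -> T -> T) (x y : T) : Prop := j x y = y.

Definition is_glb {T : Type} (j : T -> T -> T) (m x y : T) : Prop :=
  sle j m x /\ sle j m y /\
  (forall z, sle j z x -> sle j z y -> sle j z m).

(* The induced poset is a lattice (joins are given by j; meets exist)
   and it is distributive: x /\ (y \/ z) = (x /\ y) \/ (x /\ z). *)
Definition is_distr_lattice {T : Type} (j : T -> T -> T) : Prop :=
  (forall x y, exists m, is_glb j m x y) /\
  (forall x y z mxy mxz m,
      is_glb j mxy x y -> is_glb j mxz x z -> is_glb j m x (j y z) ->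
      m = j mxy mxz).

Definition finite_type (T : Type) : Prop :=
  exists l : list T, forall x, In x l.

Definition in_box_vee (T : Type) (j : T -> T -> T) : Prop :=
  is_semilattice j /\ finite_type T /\ inhabited T /\ is_distr_lattice j.

(* Main.v *)
Require Import Defs.
From Stdlib Require Import List.

Lemma glb_unique {T : Type} (j : T -> T -> T) (m1 m2 x y : T) :
  is_semilattice j -> is_glb j m1 x y -> is_glb j m2 x y -> m1 = m2.
Proof.
  intros [_ [C _]] [H1 [H2 H3]] [G1 [G2 G3]].
  pose proof (H3 m2 G1 G2) as E1. pose proof (G3 m1 H1 H2) as E2.
  unfold sle in *. rewrite <- E1, C. exact E2.
Qed.

Lemma hom_mono {S T : Type} (jS : S -> S -> S) (jT : T -> T -> T) (f : S -> T) a b :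
  is_slat_hom jS jT f -> sle jS a b -> sle jT (f a) (f b).
Proof. unfold sle; intros H E. now rewrite <- H, E. Qed.

Theorem mainTheorem5 (A B : Type) (jA : A -> A -> A) (jB : B -> B -> B)
  (s : B -> A) (r : A -> B) :
  in_box_vee A jA ->
  is_semilattice jB ->
  is_slat_hom jB jA s ->
  is_slat_hom jA jB r ->
  (forall b, r (s b) = b) ->
  in_box_vee B jB.
Proof.
  intros [SA [[l Hl] [[a0] [Mt Dis]]]] SB Hs Hr Hrs.
  assert (Glb : forall x y m, is_glb jA m (s x) (s y) -> is_glb jB (r m) x y).
  { intros x y m [G1 [G2 G3]]. split; [|split].
    - rewrite <- (Hrs x). now apply (hom_mono jA jB r).
    - rewrite <- (Hrs y). now apply (hom_mono jA jB r).
    - intros z Z1 Z2. rewrite <- (Hrs z). apply (hom_mono jA jB r); auto.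
      apply G3; now apply (hom_mono jB jA s). }
  split; [exact SB|]. split; [|split].
  - exists (map r l). intro x. rewrite <- (Hrs x). apply in_map, Hl.
  - exact (inhabits (r a0)).
  - split.
    + intros x y. destruct (Mt (s x) (s y)) as [m Hm]. eauto.
    + intros x y z mxy mxz m H1 H2 H3.
      destruct (Mt (s x) (s y)) as [a1 Ha1].
      destruct (Mt (s x) (s z)) as [a2 Ha2].
      destruct (Mt (s x) (jA (s y) (s z))) as [a3 Ha3].
      rewrite (glb_unique jB mxy (r a1) x y SB H1 (Glb _ _ _ Ha1)).
      rewrite (glb_unique jB mxz (r a2) x z SB H2 (Glb _ _ _ Ha2)).
      rewrite <- Hs in Ha3.
      rewrite (glb_unique jB m (r a3) x (jB y z) SB H3 (Glb _ _ _ Ha3)).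
      rewrite Hs in Ha3.
      rewrite (Dis _ _ _ _ _ _ Ha1 Ha2 Ha3). apply Hr.
Qed.
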